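(* Let $\ell,c,d\in\mathbb{N}$ and let $\beta$ be a $(c,d)$-disjointed $\ell$-covering of a graph $G$. Then $\beta$ is $(c,f)$-disjointed, where $f(t):=d\,t^c$ for each $t\in\mathbb{N}$.
   Context: Graphs are finite, simple and undirected. For a set $B\subseteq V(G)$, $N_G(B)$ is the set of vertices of $G$ adjacent to some vertex of $B$ (so $N_G(\emptyset)=\emptyset$). An $\ell$-covering of $G$ is a set $\beta\subseteq 2^{V(G)}$ with $|B|\le \ell$ for all $B\in\beta$ and $\bigcup_{B\in\beta}B=V(G)$. For $c\in\mathbb{N}_0$ and $d\ge 0$, a covering $\beta$ is $(c,d)$-disjointed if for every $c$-tuple $(B_1,\dots,B_c)\in\beta^c$ and every connected component $X$ of $G-(B_1\cup\dots\cup B_c)$ there is $Q\subseteq V(X)$ with $|Q|\le d$ such that for every connected component $Y$ of $X-Q$ there is $i\in\{1,\dots,c\}$ with $V(Y)\cap N_G(B_i')=\emptyset$, where $B_i':=B_i\setminus(B_1\cup\dots\cup B_{i-1})$. For $t\in\mathbb{N}$, $\beta[t]:=\{\bigcup\mathcal{B} : \mathcal{B}\subseteq\beta, |\mathcal{B}|\le t\}$. For $f:\mathbb{N}\to\mathbb{R}^+$, $\beta$ is $(c,f)$-disjointed if $\beta[t]$ is $(c,f(t))$-disjointed for every $t\in\mathbb{N}$. *)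

(* Defs.v *)
From mathcomp Require Import all_boot.
Set Implicit Arguments. Unset Strict Implicit. Unset Printing Implicit Defensive.

Definition simple_graph (T : finType) (e : rel T) : Prop :=
  symmetric e /\ irreflexive e.

Section Defs.
Variables (T : finType) (e : rel T).

Definition induced_rel (U : {set T}) : rel T :=
  fun x y => [&& e x y, x \in U & y \in U].

Definition is_component (U X : {set T}) : Prop :=
  exists2 x, x \in U & X = [set y | connect (induced_rel U) x y].

Definition nbh (B : {set T}) : {set T} := [set v | [exists u in B, e u v]].

Definition covering (l : nat) (beta : {set {set T}}) : Prop :=
  (forall B, B \in beta -> #|B| <= l) /\ cover beta = [set: T].

Definition Bprime (c : nat) (Bs : 'I_c -> {set T}) (i : 'I_c) : {set T} :=
  Bs i :\: \bigcup_(j < c | j < i) Bs j.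

Definition cd_disjointed (c d : nat) (beta : {set {set T}}) : Prop :=
  forall Bs : 'I_c -> {set T}, (forall i, Bs i \in beta) ->
  forall X, is_component (~: \bigcup_(i < c) Bs i) X ->
  exists Q : {set T}, [/\ Q \subset X, #|Q| <= d &
    forall Y, is_component (X :\: Q) Y ->
      exists i : 'I_c, [disjoint Y & nbh (Bprime Bs i)]].

Definition beta_t (beta : {set {set T}}) (t : nat) : {set {set T}} :=
  [set cover S | S in [set S0 in powerset beta | #|S0| <= t]].

Definition cf_disjointed (c : nat) (f : nat -> nat) (beta : {set {set T}}) : Prop :=
  forall t, 0 < t -> cd_disjointed c (f t) (beta_t beta t).

End Defs.

(* Main.v *)
Require Import Defs.
From mathcomp Require Import all_boot.
Set Implicit Arguments. Unset Strict Implicit. Unset Printing Implicit Defensive.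

Section Aux.
Variables (T : finType) (e : rel T).

Lemma comp_mono (U U' X : {set T}) : is_component e U X -> U \subset U' ->
  exists2 X', is_component e U' X' & X \subset X'.
Proof.
move=> [x xU ->] sUU'; exists [set y | connect (induced_rel e U') x y].
  by exists x => //; apply: (subsetP sUU').
apply/subsetP=> y; rewrite !inE; apply: connect_sub => a b.
rewrite /induced_rel => /and3P[eab aU bU]; apply: connect1.
by rewrite eab !(subsetP sUU').
Qed.

Lemma gather (A : eqType) (d : nat) (P : A -> {set T} -> Prop) (L : seq A) :
  (forall a, a \in L -> exists Q, P a Q /\ #|Q| <= d) ->
  exists Q : {set T}, #|Q| <= d * size L /\
    forall a, a \in L -> exists Qa, P a Qa /\ Qa \subset Q.
Proof.
elim: L => [|a L IH] H.
  by exists set0; rewrite cards0; split => // a; rewrite in_nil.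
have [Q [cQ HQ]] := IH (fun b bL => H b (mem_behead (s := a :: L) bL)).
have [Qa [PQa cQa]] := H a (mem_head _ _).
exists (Qa :|: Q); split.
  rewrite cardsU /= mulnS; apply: leq_trans (leq_subr _ _) _.
  exact: leq_add.
move=> b; rewrite inE => /orP[/eqP->|bL]; first by exists Qa; split => //; apply: subsetUl.
have [Qb [PQb sQb]] := HQ b bL; exists Qb; split => //.
exact: subset_trans sQb (subsetUr _ _).
Qed.

Lemma foldr_mul_le (t : nat) (s : seq nat) : all (fun x => x <= t) s ->
  foldr muln 1 s <= t ^ size s.
Proof.
elim: s => //= x s IH /andP[xt hs]; rewrite expnS; exact: leq_mul (IH hs).
Qed.

End Aux.

Theorem lemma3p3 (T : finType) (e : rel T) (l c d : nat)
  (beta : {set {set T}}) :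
  simple_graph e -> 0 < l -> 0 < c -> 0 < d ->
  covering l beta -> cd_disjointed e c d beta ->
  cf_disjointed e c (fun t => d * t ^ c) beta.
Proof.
move=> _ _ _ _ _ Hcd t _ Bs HBs X HX.
pose PS i (S : {set {set T}}) := (S \subset beta) && (#|S| <= t) && (Bs i == cover S).
have exS i : exists S, PS i S.
  have := HBs i; rewrite /beta_t => /imsetP[S]; rewrite inE powersetE => /andP[sb ct] eqB.
  by exists S; rewrite /PS sb ct eqB eqxx.
pose Sf i := odflt set0 [pick S | PS i S].
have PSf i : PS i (Sf i).
  rewrite /Sf; case: pickP => [S //|H]; have [S PSS] := exS i.
  by rewrite H in PSS.
pose fam := [pred A : {ffun 'I_c -> {set T}} | [forall i, A i \in Sf i]].
pose L := enum fam.
pose P (A : {ffun 'I_c -> {set T}}) (QA : {set T}) :=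
  exists2 XA, is_component e (~: \bigcup_(i < c) A i) XA &
    [/\ X \subset XA, QA \subset XA &
    forall Y, is_component e (XA :\: QA) Y ->
      exists i : 'I_c, [disjoint Y & nbh e (Bprime A i)]].
have AsubB (A : {ffun 'I_c -> {set T}}) i : A \in fam -> A i \subset Bs i.
  move=> /forallP/(_ i) AS; have := PSf i; rewrite /PS => /andP[_ /eqP ->].
  by rewrite /cover; apply: (bigcup_sup (A i) AS).
have [|Qg [cQg HQg]] := @gather T _ d P L.
  move=> A; rewrite mem_enum => Afam.
  have sU : ~: (\bigcup_(i < c) Bs i) \subset ~: (\bigcup_(i < c) A i).
    rewrite setCS; apply/bigcupsP => i _.
    exact: subset_trans (AsubB A i Afam) (bigcup_sup i isT).
  have [XA HXA sXXA] := comp_mono HX sU.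
  have Abeta i : A i \in beta.
    have := PSf i; rewrite /PS => /andP[/andP[sb _] _].
    by apply: (subsetP sb); move: Afam => /forallP.
  have [QA [sQA cQA HQA]] := Hcd A Abeta XA HXA.
  by exists QA; split => //; exists XA.
exists (Qg :&: X); split; first exact: subsetIr.
  apply: leq_trans (subset_leq_card (subsetIl Qg X)) _.
  apply: leq_trans cQg _; rewrite leq_mul2l -cardE; apply/orP; right.
  have -> : #|fam| = foldr muln 1 [seq #|Sf i| | i : 'I_c].
    rewrite -card_family; apply: eq_card => A; rewrite !inE.
    by [].
  apply: (@leq_trans (t ^ size [seq #|Sf i| | i : 'I_c])); last by rewrite size_image card_ord.
  apply: foldr_mul_le; apply/allP => x /mapP[i _ ->].
  by have := PSf i; rewrite /PS => /andP[/andP[_ ->]].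
move=> Y HY.
case: (boolP [exists i, [disjoint Y & nbh e (Bprime Bs i)]]) => [/existsP[i Hi]|]; first by exists i.
rewrite negb_exists => /forallP Hn; exfalso.
pose PA i (A : {set T}) := (A \in Sf i) && [exists u in A, (u \in Bprime Bs i) && [exists y in Y, e u y]].
pose Af := [ffun i => odflt set0 [pick A | PA i A]].
have PAf i : PA i (Af i).
  rewrite /Af ffunE; case: pickP => [A //|Hnone]; exfalso.
  have := Hn i; rewrite -setI_eq0 => /set0Pn[y]; rewrite !inE => /andP[yY /existsP[u /andP[uB euy]]].
  have : u \in Bs i by move: uB; rewrite /Bprime inE => /andP[].
  have := PSf i; rewrite /PS => /andP[_ /eqP ->] /bigcupP[A AS uA].
  have := Hnone A; rewrite /PA AS /= => /negbT/negP; apply; apply/existsP; exists u.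
  by rewrite uA uB /=; apply/existsP; exists y; rewrite yY.
have Afam : Af \in fam by rewrite inE; apply/forallP => i; have /andP[] := PAf i.
have [QA [[XA HXA [sX sQA HA]] sQAg]] := HQg Af ltac:(by rewrite mem_enum).
have sU : X :\: (Qg :&: X) \subset XA :\: QA.
  apply/subsetP => x; rewrite !inE => /andP[xn xX]; rewrite (subsetP sX) // andbT.
  by apply: contra xn => xQA; rewrite (subsetP sQAg) // xX.
have [Y' HY' sYY'] := comp_mono HY sU.
have [i Hi] := HA Y' HY'.
have /andP[_ /existsP[u /andP[uA /andP[uB /existsP[y /andP[yY euy]]]]]] := PAf i.
have : y \in nbh e (Bprime Af i).
  rewrite inE; apply/existsP; exists u; rewrite euy andbT /Bprime inE uA andbT.
  apply/bigcupP => -[j ji uj].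
  move: uB; rewrite /Bprime inE => /andP[/negP + _]; apply; apply/bigcupP; exists j => //.
  exact: (subsetP (AsubB Af j Afam) u uj).
by rewrite (disjointFr Hi (subsetP sYY' y yY)).
Qed.
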